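(* Let $G$ be a subcubic graph (maximum degree at most $3$), and let $D$ be a maximum dissociation set of $G$ which, among all maximum dissociation sets of $G$, maximizes the number of isolated vertices of $G[D]$. Then the graph $G[V(G)\setminus D]$ has maximum degree at most $1$.
   Context: All graphs are finite, simple and undirected. A set $D$ of vertices of $G$ is a dissociation set if the induced subgraph $G[D]$ has maximum degree at most $1$; the dissociation number $\mathrm{diss}(G)$ is the maximum order of a dissociation set, and a maximum dissociation set is one of order $\mathrm{diss}(G)$. *)

(* Defs.v *)
From mathcomp Require Import all_boot.
Set Implicit Arguments. Unset Strict Implicit. Unset Printing Implicit Defensive.

Definition simple_graph (T : finType) (e : rel T) : Prop :=
  symmetric e /\ irreflexive e.

Definition nbhd (T : finType) (e : rel T) (v : T) : {set T} := [set u | e v u].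

Definition ideg (T : finType) (e : rel T) (S : {set T}) (v : T) : nat :=
  #|nbhd e v :&: S|.

Definition subcubic (T : finType) (e : rel T) : Prop :=
  forall v : T, #|nbhd e v| <= 3.

Definition maxdeg_le1 (T : finType) (e : rel T) (S : {set T}) : Prop :=
  forall v, v \in S -> ideg e S v <= 1.

Definition dissociation_set (T : finType) (e : rel T) (D : {set T}) : Prop :=
  maxdeg_le1 e D.

Definition max_dissociation_set (T : finType) (e : rel T) (D : {set T}) : Prop :=
  dissociation_set e D /\
  forall D' : {set T}, dissociation_set e D' -> #|D'| <= #|D|.

Definition n_isolated (T : finType) (e : rel T) (D : {set T}) : nat :=
  #|[set v in D | ideg e D v == 0]|.

(* Main.v *)
Require Import Defs.
From mathcomp Require Import all_boot.

Theorem mainTheorem4 (T : finType) (e : rel T) (D : {set T}) :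
  simple_graph e ->
  subcubic e ->
  max_dissociation_set e D ->
  (forall D' : {set T}, max_dissociation_set e D' ->
     n_isolated e D' <= n_isolated e D) ->
  maxdeg_le1 e (~: D).
Proof.
move=> [esym eirr] sub [dD maxD] isoD v; rewrite inE => vnD.
rewrite /ideg; set N := nbhd e v.
rewrite leqNgt; apply/negP => H2.
have cardND : #|N :&: D| <= 1.
  have := cardsID D N; rewrite setDE => E.
  have := sub v; rewrite -/N -E; move: H2; case: #|N :&: ~: D| => [|[|k]] //.
  move=> _; rewrite !addnS ltnS. by move/(leq_trans (leq_addr _ _)).
have inN : forall z, (z \in N) = e v z by move=> z; rewrite inE.
have irr : forall z, e z z = false by move=> z; apply: eirr.
case: (boolP [exists x, (x \in N :&: D) && (ideg e D x != 0)]).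
- case/existsP => x /andP [xND xnz].
  have xD : x \in D by move: xND; rewrite inE => /andP [].
  have NDx : forall z, z \in N -> z \in D -> z = x.
    move=> z zN zD; apply: (card_le1_eqP cardND); by rewrite // inE zN zD.
  have dx : #|nbhd e x :&: D| <= 1 by apply: dD.
  have [y yxD] : exists y, y \in nbhd e x :&: D.
    apply/set0Pn; rewrite -card_gt0 lt0n; exact: xnz.
  have yD : y \in D by move: yxD; rewrite inE => /andP [].
  have exy : e x y by move: yxD; rewrite !inE => /andP [].
  have yv : y != v by apply/eqP => yv; rewrite -yv yD in vnD.
  have yx : y != x by apply/eqP => yx; rewrite yx irr in exy.
  set D' := v |: (D :\ x).
  have Hs : forall z, z \in D' -> nbhd e z :&: D' \subset (nbhd e z :&: D) :\ x.
    move=> z zD'; apply/subsetP => u; rewrite !inE => /andP [ezu].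
    case/orP => [/eqP uv | /andP [ux uD]]; last by rewrite ux ezu uD.
    subst u; move: zD'; rewrite !inE => /orP [/eqP zv | /andP [zx zD]].
      by rewrite zv irr in ezu.
    have zN : z \in N by rewrite inN esym.
    by rewrite (NDx z zN zD) eqxx in zx.
  have zero_of : forall (z : T) (A : {set T}), x \in A -> #|A| <= 1 -> #|A :\ x| = 0.
    move=> z A xA; rewrite (cardsD1 x A) xA; by case: #|A :\ x|.
  have dD' : dissociation_set e D'.
    move=> z zD'; rewrite /ideg; apply: leq_trans (subset_leq_card (Hs z zD')) _.
    move: zD'; rewrite !inE => /orP [/eqP -> | /andP [_ zD]].
      apply: leq_trans cardND; apply: subset_leq_card; exact: subsetDl.
    apply: leq_trans (dD z zD); apply: subset_leq_card; exact: subsetDl.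
  have cD' : #|D'| = #|D|.
    rewrite /D' cardsU1 (cardsD1 x D) xD !inE (negbTE vnD) andbF /=.
    by rewrite add1n.
  have mD' : max_dissociation_set e D' by split => // D2 /maxD; rewrite cD'.
  have := isoD D' mD'.
  set I := [set w in D | ideg e D w == 0].
  have vI : v \notin y |: I by rewrite !inE eq_sym (negbTE yv) (negbTE vnD).
  have yI : y \notin I.
    rewrite inE yD /= /ideg cards_eq0; apply/set0Pn; exists x.
    by rewrite !inE esym exy xD.
  have sub' : v |: (y |: I) \subset [set w in D' | ideg e D' w == 0].
    apply/subsetP => w; rewrite !inE => /or3P [/eqP -> | /eqP -> | /andP [wD /eqP w0]].
    + rewrite eqxx /= /ideg -leqn0.
      have vD' : v \in D' by rewrite !inE eqxx.
      apply: leq_trans (subset_leq_card (Hs v vD')) _.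
      rewrite (zero_of v) //; rewrite inE xD andbT -inN; by case/setIP: xND.
    + have yD' : y \in D' by rewrite !inE yx yD orbT.
      rewrite yx yD orbT /= /ideg -leqn0.
      apply: leq_trans (subset_leq_card (Hs y yD')) _.
      rewrite (zero_of y) //; [by rewrite !inE esym exy xD | exact: dD].
    + have wx : w != x by apply/eqP => wx; rewrite -wx w0 in xnz.
      have wD' : w \in D' by rewrite !inE wx wD orbT.
      rewrite wx wD orbT /= /ideg -leqn0.
      apply: leq_trans (subset_leq_card (Hs w wD')) _.
      rewrite -w0; apply: subset_leq_card; exact: subsetDl.
  move/(leq_trans (subset_leq_card sub')).
  rewrite /n_isolated -/I cardsU1 vI cardsU1 yI add1n add1n => h. by have := leq_trans (leqnSn _) h; rewrite ltnn.
- rewrite negb_exists => /forallP Hall.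
  set D' := v |: D.
  have dD' : dissociation_set e D'.
    move=> z; rewrite /ideg !inE => /orP [/eqP -> | zD].
      apply: leq_trans cardND; apply: subset_leq_card; apply/subsetP => u.
      rewrite !inE => /andP [evu]; case/orP => [/eqP uv|->]; last by rewrite evu.
      by rewrite uv irr in evu.
    case: (boolP (z \in N)) => zN.
      have := Hall z; rewrite inE zN zD /= negbK /ideg cards_eq0 => /eqP z0.
      apply: leq_trans (_ : #|[set v]| <= 1); last by rewrite cards1.
      apply: subset_leq_card; apply/subsetP => u; rewrite !inE => /andP [ezu].
      case/orP => // uD; have : u \in nbhd e z :&: D by rewrite !inE ezu uD.
      by rewrite z0 inE.
    apply: leq_trans (dD z zD); apply: subset_leq_card; apply/subsetP => u.
    rewrite !inE => /andP [ezu]; case/orP => [/eqP uv|uD]; last by rewrite ezu uD.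
    by subst u; rewrite inN esym ezu in zN.
  have := maxD D' dD'; by rewrite /D' cardsU1 vnD add1n ltnn.
Qed.
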